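(* Let $\Sigma$ be a finite set and $n\geq 1$. Every nonempty subset $C\subseteq\Sigma^n$ satisfying property (A) has cardinality at least $2^n$.
   Context: A set $M\subseteq\Sigma^n$ satisfies property (A) if for every element $\bar x\in M$ and every position $i\in\{1,\dots,n\}$ there exists another element $\bar y\in M$, $\bar y\neq\bar x$, that differs from $\bar x$ only in position $i$. *)

(* Defs.v *)
From mathcomp Require Import all_boot.
Set Implicit Arguments. Unset Strict Implicit. Unset Printing Implicit Defensive.

(* Words of length n over Sigma: Sigma^n = {ffun 'I_n -> Sigma}; positions 1..n
   are represented by 'I_n = {0,...,n-1}. *)

(* y differs from x only in position i (possibly also equal; distinctness is
   required separately). *)
Definition differ_only_at (Sigma : finType) (n : nat) (i : 'I_n)
  (x y : {ffun 'I_n -> Sigma}) : Prop :=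
  forall j : 'I_n, j != i -> y j = x j.

Definition propertyA (Sigma : finType) (n : nat) (M : {set {ffun 'I_n -> Sigma}}) : Prop :=
  forall x, x \in M -> forall i : 'I_n,
    exists y, [/\ y \in M, y != x & differ_only_at i x y].

(* Main.v *)
Require Import Defs.
From mathcomp Require Import all_boot.

Definition PA (Sigma : finType) (n : nat) (S : {set 'I_n}) (M : {set {ffun 'I_n -> Sigma}}) : Prop :=
  forall x, x \in M -> forall i, i \in S ->
    exists y, [/\ y \in M, y != x & differ_only_at i x y].

Arguments PA {Sigma n}.
Lemma key (Sigma : finType) (n : nat) (k : nat) : forall (S : {set 'I_n})
  (C : {set {ffun 'I_n -> Sigma}}), #|S| = k -> C != set0 -> PA S C -> 2 ^ k <= #|C|.
Proof.
elim: k => [|k IH] S C HS HC HP; first by rewrite expn0 card_gt0.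
have /card_gt0P [i Hi] : 0 < #|S| by rewrite HS.
case/set0Pn: HC => x Hx.
have [y [Hy Hyx Hd]] := HP x Hx i Hi.
have Hyi : y i != x i.
  apply: contra Hyx => /eqP E; apply/eqP/ffunP => j.
  by case: (eqVneq j i) => [->|/Hd].
set Ca := fun a => [set z in C | z i == a].
have HS' : #|S :\ i| = k by move: HS; rewrite (cardsD1 i S) Hi add1n => -[].
have sub a : Ca a \subset C by apply/subsetP => z; rewrite inE => /andP[].
have HPa a : PA (S :\ i) (Ca a).
  move=> z; rewrite inE => /andP [Hz /eqP Hza] j; rewrite !inE => /andP [Hji Hj].
  have [w [Hw Hwz Hdw]] := HP z Hz j Hj.
  exists w; split => //; rewrite inE Hw /= Hdw //.
  by rewrite Hza. by rewrite eq_sym.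
have Ha : 2 ^ k <= #|Ca (x i)|.
  apply: IH HS' _ (HPa _); apply/set0Pn; exists x; by rewrite inE Hx eqxx.
have Hb : 2 ^ k <= #|Ca (y i)|.
  apply: IH HS' _ (HPa _); apply/set0Pn; exists y; by rewrite inE Hy eqxx.
have Hdis : Ca (x i) :&: Ca (y i) = set0.
  apply/setP => z; rewrite !inE.
  case: (z \in C) => //=; apply/negP => /andP [/eqP -> /eqP E].
  by rewrite E eqxx in Hyi.
have : #|Ca (x i) :|: Ca (y i)| <= #|C|.
  by apply: subset_leq_card; rewrite subUset !sub.
rewrite cardsU Hdis cards0 subn0 expnS mul2n -addnn => H.
exact: leq_trans (leq_add Ha Hb) H.
Qed.

Theorem proposition1 (Sigma : finType) (n : nat) (C : {set {ffun 'I_n -> Sigma}}) :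
  1 <= n -> C != set0 -> propertyA C -> 2 ^ n <= #|C|.
Proof.
move=> _ HC HA.
apply: (@key Sigma n n [set: 'I_n]) => //; first by rewrite cardsT card_ord.
move=> x Hx i _; exact: HA.
Qed.
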